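(* Let $Q$ be a finite interval order and let $A$ and $B$ be disjoint subsets of the ground set of $Q$. Then there exists a linear extension $L$ of $Q$ such that $a > b$ in $L$ for every $a \in A$ and $b \in B$ with $a$ and $b$ incomparable in $Q$.
   Context: Posets are finite and reflexive. A finite poset $P$ is an interval order if each element $x$ can be assigned a closed bounded real interval $[\ell(x), r(x)]$ such that for distinct $x,y$, $x<y$ in $P$ if and only if $r(x) < \ell(y)$. A linear extension of $P$ is a total order $L$ on the ground set of $P$ such that $x<y$ in $P$ implies $x<y$ in $L$. *)

(* Defs.v *)
From mathcomp Require Import all_boot all_order all_algebra.
From mathcomp Require Import reals.
Set Implicit Arguments. Unset Strict Implicit. Unset Printing Implicit Defensive.
Import Order.TTheory GRing.Theory Num.Theory.
Local Open Scope ring_scope.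

Definition is_poset (T : finType) (le : rel T) : Prop :=
  reflexive le /\ antisymmetric le /\ transitive le.

Definition strict (T : finType) (le : rel T) : rel T := fun x y => (x != y) && le x y.

Definition is_interval_order (R : realType) (T : finType) (le : rel T) : Prop :=
  is_poset le /\
  exists (l r : T -> R), (forall x, l x <= r x) /\
    (forall x y, x != y -> (strict le x y <-> r x < l y)).

Definition is_linear_extension (T : finType) (le L : rel T) : Prop :=
  is_poset L /\ (forall x y, L x y || L y x) /\ (forall x y, le x y -> L x y).

Definition incomparable (T : finType) (le : rel T) (x y : T) : Prop :=
  ~~ le x y /\ ~~ le y x.

(* Main.v *)
Require Import Defs.
From mathcomp Require Import all_boot all_order all_algebra.
From mathcomp Require Import reals.
Import Order.TTheory GRing.Theory Num.Theory.

Theorem lemma1 (R : realType) (T : finType) (le : rel T) (A B : {set T}) :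
  is_interval_order R le ->
  [disjoint A & B] ->
  exists L : rel T, is_linear_extension le L /\
    (forall a b, a \in A -> b \in B -> incomparable le a b -> strict L b a).
Proof.
move=> [[Hrefl _] [l [r [Hlr Hint]]]] Hdis.
pose p x : R := if x \in A then r x else l x.
pose c x : nat := if x \in A then 1%N else 0%N.
pose f x : R *l (nat *l nat) := (p x, (c x, (enum_rank x : nat))).
have finj : injective f.
  move=> x y [_ _ /val_inj]; exact: enum_rank_inj.
have pxr x : (l x <= p x)%R /\ (p x <= r x)%R.
  by rewrite /p; case: ifP => _; split => //.
exists (fun x y => (f x <= f y)%O); split.
  split.
    split; first by move=> x /=; exact: Order.POrderTheory.le_refl.
    split; first by move=> x y /= /Order.POrderTheory.le_anti /finj.
    by move=> x y z /= H1 H2; exact: Order.POrderTheory.le_trans H1 H2.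
  split; first by move=> x y /=; exact: le_total.
  move=> x y Hxy /=.
  have [->|nxy] := eqVneq x y; first exact: Order.POrderTheory.le_refl.
  have : (r x < l y)%R by apply/Hint => //; rewrite /strict nxy.
  move=> hlt.
  have hp : (p x < p y)%R.
    case: (pxr x) => _ h1; case: (pxr y) => h2 _.
    exact: Order.POrderTheory.le_lt_trans h1 (Order.POrderTheory.lt_le_trans hlt h2).
  rewrite leEprodlexi /= (Order.POrderTheory.ltW hp) /=.
  by rewrite (Order.POrderTheory.lt_geF hp).
move=> a b aA bB [nab nba].
have bnA : b \notin A.
  apply/negP => bA; move: Hdis; rewrite disjoint_subset => /subsetP /(_ b bA); by rewrite inE bB.
have nab' : a != b by apply/negP => /eqP eab; move: nab; rewrite eab Hrefl.
have hle : (p b <= p a)%R.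
  rewrite /p aA (negbTE bnA).
  rewrite Order.TotalTheory.leNgt; apply/negP => h.
  have : strict le a b by apply/(Hint a b nab').
  by rewrite /strict (negbTE nab) andbF.
rewrite /strict eq_sym nab' /=.
rewrite leEprodlexi /= hle /=.
apply/implyP => _.
by rewrite leEprodlexi /c aA (negbTE bnA).
Qed.
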